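(* Let $N\ge 1$ be an integer and let $\mathcal S=(\mathbf s^0,\dots,\mathbf s^{M-1})$ be an $(M,1,\mathbb L)$-$N$-CO-SF in which every sequence $\mathbf s^m$ is nonzero. Then $M\le N$. Moreover, this bound is attainable: for every $N\ge1$ there exists an $(N,1,\mathbb L)$-$N$-CO-SF consisting of nonzero sequences.
   Context: All sequences are finite complex sequences. A sequence $\mathbf s=(s_0,\dots,s_{L-1})$ of length $L$ is identified with the function $s:\mathbb Z\to\mathbb C$ given by $s(n)=s_n$ for $0\le n<L$ and $s(n)=0$ otherwise. For sequences $\mathbf s,\mathbf s'$ of lengths $L,L'$ (possibly different), the aperiodic correlation is $R_{\mathbf s,\mathbf s'}(\tau)=\sum_{l=0}^{L-1}s(l)\,\overline{s'(l+\tau)}$ for $\tau\in\mathbb Z$. The energy of $\mathbf s$ is $E_{\mathbf s}=R_{\mathbf s,\mathbf s}(0)$. An $(M,1,\mathbb L)$-$N$-shift cross-orthogonal sequence family ($N$-CO-SF) is an indexed family $(\mathbf s^0,\dots,\mathbf s^{M-1})$ of complex sequences, where $\mathbf s^m$ has length $L^{(m)}$ divisible by $N$, and $\mathbb L$ is the set of distinct values among $L^{(0)},\dots,L^{(M-1)}$, such that for all $0\le m,m'<M$ and all $k\in\mathbb Z$, $R_{\mathbf s^m,\mathbf s^{m'}}(kN)=E_{\mathbf s^m}\,\delta(m-m')\,\delta(k)$, where $\delta$ is the Kronecker delta ($\delta(0)=1$, $\delta(x)=0$ for $x\neq0$). *)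

(* Defs.v *)
From HB Require Import structures.
From mathcomp Require Import all_boot all_order all_algebra.
Set Implicit Arguments. Unset Strict Implicit. Unset Printing Implicit Defensive.
Import Order.TTheory GRing.Theory Num.Theory.
Local Open Scope ring_scope.

(* A finite sequence s = (s_0,...,s_{L-1}) is a [seq C]; L = size s.
   Its extension to Z: s(n) = s_n for 0 <= n < L, 0 otherwise. *)
Definition sval (C : numClosedFieldType) (s : seq C) (n : int) : C :=
  match n with Posz k => nth 0 s k | Negz _ => 0 end.

Definition acorr (C : numClosedFieldType) (s s' : seq C) (tau : int) : C :=
  \sum_(l < size s) sval s (Posz l) * (sval s' (Posz l + tau))^*.

Definition energy (C : numClosedFieldType) (s : seq C) : C := acorr s s 0.

(* (M,1,L)-N-shift cross-orthogonal sequence family, indexed by 'I_M.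
   (The set L of lengths is determined by the family.) *)
Definition is_NCOSF (C : numClosedFieldType) (N M : nat) (s : 'I_M -> seq C) : Prop :=
  (forall m, (N %| size (s m))%N) /\
  forall (m m' : 'I_M) (k : int),
    acorr (s m) (s m') (k * (N : int)) =
    energy (s m) * (m == m')%:R * (k == 0)%:R.

Definition nonzero_seq (C : numClosedFieldType) (s : seq C) : bool :=
  has (fun x => x != 0) s.

(* Main.v *)
Require Import Defs.
From HB Require Import structures.
From mathcomp Require Import all_boot all_order all_algebra.
Import Order.TTheory GRing.Theory Num.Theory.
Local Open Scope ring_scope.
Set Implicit Arguments. Unset Strict Implicit.

Section S.
Variable C : numClosedFieldType.

Lemma reindex (h : int -> C) (J j : nat) : (j <= J)%N ->
  (forall n : int, n < 0 -> h n = 0) -> (forall n : int, Posz J <= n -> h n = 0) ->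
  \sum_(i < J + J) h (Posz j + Posz i - Posz J) = \sum_(j' < J) h (Posz j').
Proof.
move=> hj h0 h1.
rewrite -(big_mkord xpredT (fun i : nat => h (Posz j + Posz i - Posz J))).
rewrite (@big_cat_nat _ _ _ (J - j + J)) ?leq0n //=; last by rewrite leq_add2r leq_subr.
rewrite (@big_cat_nat _ _ _ (J - j)) ?leq0n ?leq_addr //=.
rewrite [X in X + _ + _]big_nat_cond big1 ?add0r; last first.
  move=> i /andP[/andP[_ hi] _]; apply: h0.
  by rewrite subr_lt0 -PoszD ltz_nat -ltn_subRL.
have -> : \sum_(J - j + J <= i < J + J) h (j%:Z + i%:Z - J%:Z) = 0.
  rewrite big_nat_cond big1 //.
  move=> i /andP[/andP[hi _] _]; apply: h1.
  have hJi : (J + J <= j + i)%N by rewrite -{1}(subnKC hj) -addnA leq_add2l.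
  have hJ : (J <= j + i)%N by apply: leq_trans hJi; rewrite leq_addr.
  by rewrite -PoszD (subzn hJ) lez_nat leq_subRL.
rewrite addr0 -{1}(add0n (J - j)%N) big_addn addKn big_mkord.
apply: eq_bigr => i _; congr h.
by rewrite PoszD -(subzn hj) addrCA subrKC addrK.
Qed.
Lemma sval_neg (s : seq C) (x : int) : x < 0 -> Defs.sval s x = 0.
Proof. by case: x. Qed.

Lemma sval_big (s : seq C) (x : int) : (size s)%:Z <= x -> Defs.sval s x = 0.
Proof. case: x => //= n; rewrite lez_nat => h; exact: nth_default. Qed.

Lemma sum_blocks (F : nat -> C) (N J : nat) :
  \sum_(l < N * J) F l = \sum_(j < J) \sum_(r < N) F (r + j * N)%N.
Proof.
rewrite -(big_mkord xpredT) mulnC big_nat_mul big_mkord.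
apply: eq_bigr => j _.
rewrite -{1}(add0n (j * N)%N) big_addn mulSn addnK big_mkord.
by [].
Qed.

Lemma acorr_ext (s s' : seq C) (tau : int) (L : nat) : (size s <= L)%N ->
  acorr s s' tau = \sum_(l < L) Defs.sval s (Posz l) * (Defs.sval s' (Posz l + tau))^*.
Proof.
move=> hL; rewrite /acorr (big_ord_widen _ (fun l : nat => Defs.sval s (Posz l) * (Defs.sval s' (Posz l + tau))^*) hL).
rewrite big_mkcond /=; apply: eq_bigr => i _.
case: ifP => // /negbT; rewrite -leqNgt => h.
by rewrite nth_default ?mul0r.
Qed.

Lemma int_id (r j N : nat) (i J : nat) :
  Posz (r + j * N)%N + (Posz i - Posz J) * Posz N = Posz r + (Posz j + Posz i - Posz J) * Posz N.
Proof.
by rewrite PoszD PoszM -addrA -mulrDl addrA.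
Qed.


Definition pv (s : seq C) (N J r : nat) : C := \sum_(j < J) Defs.sval s (Posz (r + j * N)%N).

Lemma hzero0 (s : seq C) (N r : nat) (n : int) : (r < N)%N -> n < 0 ->
  (Defs.sval s (Posz r + n * Posz N))^* = 0.
Proof.
move=> hr; case: n => // k _.
rewrite NegzE mulNr -PoszM sval_neg ?conjC0 //.
rewrite subr_lt0 ltz_nat; apply: leq_trans hr _.
by rewrite mulSn leq_addr.
Qed.

Lemma hzero1 (s : seq C) (N J r : nat) (n : int) : (size s <= N * J)%N -> Posz J <= n ->
  (Defs.sval s (Posz r + n * Posz N))^* = 0.
Proof.
move=> hs; case: n => // k; rewrite lez_nat => hk.
rewrite -PoszM -PoszD sval_big ?conjC0 // lez_nat.
apply: leq_trans hs _; apply: leq_trans (leq_addl r _).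
by rewrite mulnC leq_mul2r hk orbT.
Qed.

Lemma key (s s' : seq C) (N J : nat) : (size s <= N * J)%N -> (size s' <= N * J)%N ->
  \sum_(i < J + J) acorr s s' ((Posz i - Posz J) * Posz N)
  = \sum_(r < N) pv s N J r * (pv s' N J r)^*.
Proof.
move=> hs hs'.
under eq_bigr => i _ do rewrite (acorr_ext s' _ hs) (sum_blocks (fun l => Defs.sval s (Posz l) * (Defs.sval s' (Posz l + (Posz i - Posz J) * Posz N))^*)).
rewrite exchange_big /=.
under eq_bigr => j _ do rewrite exchange_big /=.
rewrite exchange_big /=.
apply: eq_bigr => r _.
rewrite /pv big_distrl /=.
apply: eq_bigr => j _.
rewrite -big_distrr /=; congr (_ * _).
rewrite rmorph_sum.
under eq_bigr => i _ do rewrite int_id.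
rewrite (@reindex (fun n => (Defs.sval s' (Posz r + n * Posz N))^*) J j).
- by apply: eq_bigr => jj _; rewrite -PoszM -PoszD.
- exact: ltnW (ltn_ord j).
- by move=> n; apply: hzero0.
- by move=> n; apply: hzero1.
Qed.


Lemma energy_neq0 (s : seq C) : nonzero_seq s -> energy s != 0.
Proof.
move=> /(has_nthP 0) [i hi hx].
rewrite /energy /acorr.
under eq_bigr => l _ do rewrite addr0 /= -normCK.
rewrite psumr_eq0; last by move=> l _; rewrite exprn_ge0.
apply/negP => /allP /(_ (Ordinal hi) (mem_index_enum _)) /=.
by rewrite sqrf_eq0 normr_eq0 (negbTE hx).
Qed.

Lemma bound (N M : nat) (s : 'I_M -> seq C) :
  (1 <= N)%N -> is_NCOSF N s -> (forall m, nonzero_seq (s m)) -> (M <= N)%N.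
Proof.
move=> hN [_ hS] hnz.
set J := (\max_(m < M) size (s m)).+1.
have hsz : forall m, (size (s m) <= N * J)%N.
  move=> m; apply: leq_trans (leq_pmull _ hN).
  exact: leq_trans (leq_bigmax m) (leqnSn _).
have hJ : (J < J + J)%N by rewrite -{1}(addn0 J) ltn_add2l.
have hsum : forall m m' : 'I_M,
  \sum_(r < N) pv (s m) N J r * (pv (s m') N J r)^* = energy (s m) * (m == m')%:R.
  move=> m m'; rewrite -key ?hsz //.
  under eq_bigr => i _ do rewrite hS.
  rewrite (bigD1 (Ordinal hJ)) //= subrr eqxx mulr1 big1 ?addr0 //.
  move=> i hi; rewrite subr_eq0 eqz_nat.
  have -> : (i == J :> nat) = false.
    by apply/negbTE; apply: contra hi => /eqP hiJ; apply/eqP; apply: val_inj.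
  by rewrite mulr0.
set A : 'M[C]_(M, N) := \matrix_(m, r) pv (s m) N J r.
set B : 'M[C]_(N, M) := \matrix_(r, m) (pv (s m) N J r)^*.
have hAB : A *m B = diag_mx (\row_m energy (s m)).
  apply/matrixP => m m'; rewrite !mxE.
  under eq_bigr => r _ do rewrite !mxE.
  by rewrite hsum mulr_natr.
have hU : A *m B \in unitmx.
  rewrite hAB unitmxE det_diag unitr_prod // => m _.
  by rewrite mxE unitfE energy_neq0.
rewrite -{1}(mxrank_unit hU).
exact: leq_trans (mxrankM_maxl _ _) (rank_leq_col _).
Qed.


Definition eseq (N : nat) (m : nat) : seq C := mkseq (fun i => (i == m)%:R) N.

Lemma acorr_e (N : nat) (m m' : 'I_N) (k : int) :
  acorr (eseq N m) (eseq N m') (k * Posz N) = ((m == m') && (k == 0))%:R.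
Proof.
rewrite /acorr size_mkseq (bigD1 m) //= big1 ?addr0; last first.
  by move=> i hi; rewrite nth_mkseq //; have /negbTE -> : (i : nat) != m by []; rewrite mul0r.
rewrite nth_mkseq // eqxx mul1r.
case: k => [[|k']|k'].
- by rewrite mul0r addr0 /= nth_mkseq // conjC_nat andbT.
  rewrite (@hzero1 _ N 1%N) ?size_mkseq ?muln1 //; first by case: (m == m').
- by rewrite hzero0 //; case: (m == m').
Qed.

Lemma exist_e (N : nat) : is_NCOSF N (fun m : 'I_N => eseq N m) /\
  forall m : 'I_N, nonzero_seq (eseq N m).
Proof.
split; [split|].
- by move=> m; rewrite size_mkseq dvdnn.
- move=> m m' k.
  have hE : energy (eseq N m) = 1.
    by rewrite /energy -(mul0r (Posz N)) acorr_e eqxx.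
  rewrite acorr_e hE mul1r -natrM mulnb.
  by [].
- move=> m; apply/(has_nthP 0); exists m; first by rewrite size_mkseq.
  by rewrite nth_mkseq // eqxx oner_neq0.
Qed.

End S.

Unset Implicit Arguments.
Set Strict Implicit.

Theorem theorem1 (C : numClosedFieldType) (N : nat) (hN : (1 <= N)%N) :
  (forall (M : nat) (s : 'I_M -> seq C),
      is_NCOSF N s -> (forall m, nonzero_seq (s m)) -> (M <= N)%N) /\
  (exists s : 'I_N -> seq C,
      is_NCOSF N s /\ forall m, nonzero_seq (s m)).
Proof.
split.
- by move=> M s hS hnz; apply: (bound hN hS hnz).
- exists (fun m : 'I_N => eseq C N m); exact: exist_e.
Qed.
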